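(* Let $\mathbb{F}=\mathbb{F}_{q^m}$, let $k\ge 1$, and let $(x_1,y_1),\dots,(x_r,y_r)\in\mathbb{F}\times\mathbb{F}$ be linearly independent over $\mathbb{F}_q$. Run the following procedure. Initialize $f_0(x,y)=x$, $f_1(x,y)=y$. For $i=1,\dots,r$: set $\Delta_0=f_0(x_i,y_i)$, $\Delta_1=f_1(x_i,y_i)$; if $\Delta_0=0$, replace $f_1$ by $f_1^q-\Delta_1^{q-1}f_1$; else if $\Delta_1=0$, replace $f_0$ by $f_0^q-\Delta_0^{q-1}f_0$; else, if $\deg_{1,k-1}(f_0)\le\deg_{1,k-1}(f_1)$, simultaneously replace $f_1$ by $\Delta_1 f_0-\Delta_0 f_1$ and $f_0$ by $f_0^q-\Delta_0^{q-1}f_0$; otherwise simultaneously replace $f_0$ by $\Delta_1 f_0-\Delta_0 f_1$ and $f_1$ by $f_1^q-\Delta_1^{q-1}f_1$ (in each simultaneous update, the right-hand sides use the values of $f_0,f_1$ before the update). Then the final polynomials $f_0$ and $f_1$ are, respectively, $x$-minimal and $y$-minimal with respect to the set $\{(x_i,y_i)\}_{i=1}^r$.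
   Context: A bivariate linearized polynomial over $\mathbb{F}$ is $f(x,y)=f_x(x)+f_y(y)$ with $f_x(x)=\sum_i a_i x^{q^i}$, $f_y(y)=\sum_j b_j y^{q^j}$, $a_i,b_j\in\mathbb{F}$; its monomials are $x^{[i]}=x^{q^i}$ and $y^{[j]}=y^{q^j}$. $f^q$ denotes $(f(x,y))^q$, again a bivariate linearized polynomial. If $f_x\not\equiv0$ has degree $q^{d_x(f)}$ and $f_y\not\equiv0$ has degree $q^{d_y(f)}$, the $(1,k-1)$-weighted degree is $\deg_{1,k-1}(f)=\max\{d_x(f),k-1+d_y(f)\}$ (omitting a term whose part is identically zero). Monomials are totally ordered by weight, where $x^{[i]}$ has weight $i$ and $y^{[j]}$ has weight $k-1+j$, with ties broken by declaring $x^{[i]}$ smaller than $y^{[j]}$ when their weights are equal. The leading term $\mathrm{lt}(f)$ of a nonzero $f$ is its largest monomial (with nonzero coefficient) in this order. A nonzero bivariate linearized polynomial $f$ is $x$-minimal with respect to a finite set of points $P\subset\mathbb{F}\times\mathbb{F}$ if $f$ vanishes at all points of $P$, $\mathrm{lt}(f)$ is of the form $x^{[d]}$, and no nonzero bivariate linearized polynomial $g$ vanishing on $P$ with $\mathrm{lt}(g)$ of the form $x^{[e]}$ has $\mathrm{lt}(g)$ strictly smaller than $\mathrm{lt}(f)$. $y$-minimal is defined identically with leading terms of the form $y^{[j]}$. *)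

(* Defs.v *)
From HB Require Import structures.
From mathcomp Require Import all_boot all_order all_algebra all_field.
Set Implicit Arguments. Unset Strict Implicit. Unset Printing Implicit Defensive.
Import GRing.Theory.
Local Open Scope ring_scope.

(* A bivariate linearized polynomial f(x,y) = f_x(x) + f_y(y) over F,
   f_x = sum_i a_i x^{q^i}, f_y = sum_j b_j y^{q^j}, is represented by the
   pair of "q-associate" coefficient polynomials (A, B) with A`_i = a_i and
   B`_j = b_j. *)
Record blin (F : fieldType) := BLin { blx : {poly F}; bly : {poly F} }.

Section BLin.
Variables (F : fieldType) (q k : nat).

Definition blin_eval (f : blin F) (x0 y0 : F) : F :=
  \sum_(i < size (blx f)) (blx f)`_i * x0 ^+ (q ^ i)%N
  + \sum_(j < size (bly f)) (bly f)`_j * y0 ^+ (q ^ j)%N.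

Definition blin_zero (f : blin F) : bool := (blx f == 0) && (bly f == 0).

Definition blin_scale (c : F) (f : blin F) : blin F :=
  BLin (c *: blx f) (c *: bly f).

Definition blin_sub (f g : blin F) : blin F :=
  BLin (blx f - blx g) (bly f - bly g).

(* f^q: (sum a_i x^{q^i})^q = sum a_i^q x^{q^{i+1}} (F has characteristic p
   and q is a power of p). *)
Definition blin_frob (f : blin F) : blin F :=
  BLin (map_poly (fun a => a ^+ q) (blx f) * 'X)
       (map_poly (fun a => a ^+ q) (bly f) * 'X).

Definition wdeg (f : blin F) : nat :=
  maxn (if blx f != 0 then (size (blx f)).-1 else 0%N)
       (if bly f != 0 then (k - 1 + (size (bly f)).-1)%N else 0%N).

(* monomials: inl i = x^[i], inr j = y^[j] *)
Definition mono := (nat + nat)%type.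

Definition mweight (mo : mono) : nat :=
  match mo with inl i => i | inr j => (k - 1 + j)%N end.

Definition mono_lt (a b : mono) : bool :=
  (mweight a < mweight b)%N ||
  ((mweight a == mweight b) && match a, b with inl _, inr _ => true | _, _ => false end).

Definition mono_le (a b : mono) : bool := (a == b) || mono_lt a b.

Definition mcoef (f : blin F) (mo : mono) : F :=
  match mo with inl i => (blx f)`_i | inr j => (bly f)`_j end.

Definition is_lt (f : blin F) (mo : mono) : Prop :=
  mcoef f mo != 0 /\ forall mo', mcoef f mo' != 0 -> mono_le mo' mo.

Definition vanishes_on (r : nat) (P : 'I_r -> F * F) (f : blin F) : Prop :=
  forall i, blin_eval f (P i).1 (P i).2 = 0.

Definition x_minimal (r : nat) (P : 'I_r -> F * F) (f : blin F) : Prop :=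
  ~~ blin_zero f /\ vanishes_on P f /\
  exists d, is_lt f (inl d) /\
    forall g e, ~~ blin_zero g -> vanishes_on P g -> is_lt g (inl e) ->
      ~~ mono_lt (inl e) (inl d).

Definition y_minimal (r : nat) (P : 'I_r -> F * F) (f : blin F) : Prop :=
  ~~ blin_zero f /\ vanishes_on P f /\
  exists d, is_lt f (inr d) /\
    forall g e, ~~ blin_zero g -> vanishes_on P g -> is_lt g (inr e) ->
      ~~ mono_lt (inr e) (inr d).

Definition frob_step (D : F) (f : blin F) : blin F :=
  blin_sub (blin_frob f) (blin_scale (D ^+ (q - 1)) f).

Definition algo_step (fs : blin F * blin F) (pt : F * F) : blin F * blin F :=
  let: (f0, f1) := fs in
  let D0 := blin_eval f0 pt.1 pt.2 in
  let D1 := blin_eval f1 pt.1 pt.2 in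
  if D0 == 0 then (f0, frob_step D1 f1)
  else if D1 == 0 then (frob_step D0 f0, f1)
  else if (wdeg f0 <= wdeg f1)%N then
    (frob_step D0 f0, blin_sub (blin_scale D1 f0) (blin_scale D0 f1))
  else
    (blin_sub (blin_scale D1 f0) (blin_scale D0 f1), frob_step D1 f1).

Definition blin_x : blin F := BLin 1 0.
Definition blin_y : blin F := BLin 0 1.

Definition algo (r : nat) (P : 'I_r -> F * F) : blin F * blin F :=
  foldl algo_step (blin_x, blin_y) [seq P i | i <- enum 'I_r].

(* linear independence of the points over F_q = {a | a^q = a} *)
Definition Fq_lin_indep (r : nat) (P : 'I_r -> F * F) : Prop :=
  forall c : 'I_r -> F, (forall i, c i ^+ q = c i) ->
    \sum_(i < r) c i * (P i).1 = 0 -> \sum_(i < r) c i * (P i).2 = 0 ->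
    forall i, c i = 0.

End BLin.

(* Main.v *)
Require Import Defs.
From mathcomp Require Import all_boot all_order all_fingroup all_algebra all_solvable all_field.
Set Implicit Arguments. Unset Strict Implicit. Unset Printing Implicit Defensive.
Import GRing.Theory.
Local Open Scope ring_scope.

Section Coef.
Variables (F : fieldType) (q k : nat).
Hypothesis hq : (0 < q)%N.
Hypothesis hchar : [pchar F].-nat q.
Implicit Types (f g : blin F) (x y : F).

Definition cc (f : blin F) (n : nat) : F :=
  if odd n then (if (k - 1 <= n./2)%N then (bly f)`_(n./2 - (k - 1)) else 0)
  else (blx f)`_(n./2).

Lemma cc_even f j : cc f j.*2 = (blx f)`_j.
Proof. by rewrite /cc odd_double doubleK. Qed.

Lemma cc_odd f j : cc f j.*2.+1 =
  if (k - 1 <= j)%N then (bly f)`_(j - (k - 1)) else 0.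
Proof.
have hh : (j.*2.+1)./2 = j by exact: (half_bit_double j true).
by rewrite /cc hh /= odd_double.
Qed.

Lemma nat_split n : exists j, n = j.*2 \/ n = j.*2.+1.
Proof.
exists n./2; have E := odd_double_half n.
case: (odd n) E => /= E; [right|left]; rewrite -[LHS]E ?add0n //.
Qed.

Lemma cc_sub f g n : cc (blin_sub f g) n = cc f n - cc g n.
Proof. by rewrite /cc /=; case: odd; [case: ifP => _; rewrite ?coefB ?subr0 | rewrite coefB]. Qed.

Lemma cc_scale c f n : cc (blin_scale c f) n = c * cc f n.
Proof. by rewrite /cc /=; case: odd; [case: ifP => _; rewrite ?coefZ ?mulr0 | rewrite coefZ]. Qed.

Lemma zq : (0 : F) ^+ q = 0.
Proof. by rewrite expr0n eqn0Ngt hq. Qed.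

Lemma cc_frob f n : cc (blin_frob q f) n = if (2 <= n)%N then (cc f (n - 2)) ^+ q else 0.
Proof.
have hm : forall p : {poly F}, forall i, (map_poly (fun a : F => a ^+ q) p * 'X)`_i
    = if i == 0%N then 0 else (p`_i.-1) ^+ q.
  by move=> p i; rewrite coefMX; case: eqP => // _; rewrite coef_map_id0 // zq.
have [j [->|->]] := nat_split n.
  rewrite cc_even hm; case: j => [|j] //=.
  by rewrite -[(j.+1).*2]/(j.*2.+2) subn2 /= cc_even.
rewrite cc_odd hm; case: j => [|j].
  by rewrite /=; case: ifP => //; rewrite sub0n.
rewrite -[(j.+1).*2.+1]/(j.*2.+1).+2 /= subn2 /= cc_odd.
case: (leqP (k - 1) j) => h1.
  have -> : (k - 1 <= j.+1)%N by apply: leq_trans h1 _.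
  by rewrite subSn //=.
case: (leqP (k - 1) j.+1) => h2 //.
  have -> : (j.+1 - (k - 1) = 0)%N by apply/eqP; rewrite subn_eq0.
  by rewrite zq.
by rewrite zq.
Qed.


Lemma frobD (a b : F) : (a + b) ^+ q = a ^+ q + b ^+ q.
Proof. exact: exprDn_pchar. Qed.

Lemma frob_sum I (r : seq I) (P : pred I) (g : I -> F) :
  (\sum_(i <- r | P i) g i) ^+ q = \sum_(i <- r | P i) (g i) ^+ q.
Proof.
by apply: (big_morph (fun a : F => a ^+ q)) => [a b|]; rewrite ?frobD ?zq.
Qed.

Lemma sum_widen (p : {poly F}) (g : nat -> F) N : (size p <= N)%N ->
  \sum_(i < size p) p`_i * g i = \sum_(i < N) p`_i * g i.
Proof.
move=> hN; rewrite (big_ord_widen N (fun i => p`_i * g i) hN) big_mkcond /=.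
apply: eq_bigr => i _; case: ltnP => // h; by rewrite nth_default // mul0r.
Qed.

Lemma eval_bound f x y N : (size (blx f) <= N)%N -> (size (bly f) <= N)%N ->
  blin_eval q f x y = \sum_(i < N) (blx f)`_i * x ^+ (q ^ i)
                      + \sum_(i < N) (bly f)`_i * y ^+ (q ^ i).
Proof. by move=> h1 h2; rewrite /blin_eval (@sum_widen _ (fun i => x ^+ (q ^ i)) _ h1) (@sum_widen _ (fun i => y ^+ (q ^ i)) _ h2). Qed.

Definition bsz (f : blin F) := maxn (size (blx f)) (size (bly f)).

Lemma eval_bsz f x y N : (bsz f <= N)%N ->
  blin_eval q f x y = \sum_(i < N) (blx f)`_i * x ^+ (q ^ i)
                      + \sum_(i < N) (bly f)`_i * y ^+ (q ^ i).
Proof. by rewrite geq_max => /andP[h1 h2]; apply: eval_bound. Qed.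

Lemma eval_sub f g x y : blin_eval q (blin_sub f g) x y = blin_eval q f x y - blin_eval q g x y.
Proof.
pose N := (bsz f + bsz g + bsz (blin_sub f g))%N.
rewrite !(@eval_bsz _ x y N) /N ?leq_addr ?leq_addl // ?(leq_trans (leq_addr _ _) (leq_addr _ _)) //.
rewrite /=; under eq_bigr do rewrite coefB mulrBl.
under [in X in _ + X = _]eq_bigr do rewrite coefB mulrBl.
rewrite !sumrB; rewrite addrACA; congr (_ + _); by rewrite opprD.
by rewrite (leq_trans (leq_addl _ _) (leq_addr _ _)).
Qed.


Lemma eval_scale c f x y : blin_eval q (blin_scale c f) x y = c * blin_eval q f x y.
Proof.
pose N := (bsz f + bsz (blin_scale c f))%N.
rewrite !(@eval_bsz _ x y N) /N ?leq_addr ?leq_addl //=.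
under eq_bigr do rewrite coefZ -mulrA.
under [in X in _ + X = _]eq_bigr do rewrite coefZ -mulrA.
by rewrite -!mulr_sumr mulrDr.
Qed.

Lemma size_frobX (p : {poly F}) : (size (map_poly (fun a : F => a ^+ q) p * 'X)%R <= (size p).+1)%N.
Proof.
apply/leq_sizeP => j hj; rewrite coefMX; case: eqP => // _.
by rewrite coef_map_id0 ?zq // nth_default ?zq // -ltnS (ltn_predK hj).
Qed.

Lemma eval_frob f x y : blin_eval q (blin_frob q f) x y = (blin_eval q f x y) ^+ q.
Proof.
pose N := bsz f.
have h1 : (size (blx (blin_frob q f)) <= N.+1)%N.
  by apply: leq_trans (size_frobX _) _; rewrite ltnS leq_maxl.
have h2 : (size (bly (blin_frob q f)) <= N.+1)%N.
  by apply: leq_trans (size_frobX _) _; rewrite ltnS leq_maxr.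
rewrite (eval_bound _ _ h1 h2) (@eval_bsz f x y N) // frobD !frob_sum.
rewrite !big_ord_recl /= !coefMX /= !mul0r !add0r.
congr (_ + _); apply: eq_bigr => i _.
all: rewrite /bump /= add1n coefMX /= coef_map_id0 ?zq // exprMn -exprM expnSr //.
Qed.

Lemma eval_iter t f x y : blin_eval q (iter t (blin_frob q) f) x y = (blin_eval q f x y) ^+ (q ^ t).
Proof.
elim: t => [|t IH]; first by rewrite expr1.
by rewrite iterS eval_frob IH expnSr exprM.
Qed.

Lemma eval_frob_step D f x y : blin_eval q (frob_step q D f) x y =
  (blin_eval q f x y) ^+ q - D ^+ (q - 1) * blin_eval q f x y.
Proof. by rewrite /frob_step eval_sub eval_frob eval_scale. Qed.

Lemma frob_step_root D f x y : blin_eval q f x y = 0 \/ blin_eval q f x y = D ->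
  blin_eval q (frob_step q D f) x y = 0.
Proof.
rewrite eval_frob_step => -[->|->]; first by rewrite zq mulr0 subr0.
by rewrite -exprSr subn1 (ltn_predK hq) subrr.
Qed.


Definition LT f n := cc f n != 0 /\ forall n', cc f n' != 0 -> (n' <= n)%N.

Definition ccb f := (size (blx f) + (k - 1) + size (bly f)).*2.

Lemma cc_bound f n : (ccb f <= n)%N -> cc f n = 0.
Proof.
rewrite /ccb; have [j [->|->]] := nat_split n.
  rewrite leq_double cc_even => h; rewrite nth_default //.
  by apply: leq_trans h; rewrite -addnA leq_addr.
rewrite cc_odd => h; case: ifP => // hk; rewrite nth_default //.
have h' : (size (blx f) + (k - 1) + size (bly f) <= j)%N.
  by move: h; rewrite -geq_half_double (half_bit_double j true).
rewrite leq_subRL //; apply: leq_trans _ h'; rewrite -addnA leq_addl.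
by [].
Qed.

Lemma LT_exists f : (exists n, cc f n != 0) -> exists n, LT f n.
Proof.
move=> ex.
have ub : forall i, cc f i != 0 -> (i <= ccb f)%N.
  move=> i; apply: contraR; rewrite -ltnNge => /ltnW /cc_bound ->; by rewrite eqxx.
case: (ex_maxnP ex ub) => i hi hmax; exists i; split => //.
Qed.

Lemma cc_all0 f : (forall n, cc f n = 0) -> blx f = 0 /\ bly f = 0.
Proof.
move=> h; split; apply/polyP => j; rewrite coef0.
  by rewrite -cc_even h.
have := h (k - 1 + j).*2.+1; rewrite cc_odd leq_addr addKn => ->; by [].
Qed.

Lemma eval_all0 f x y : (forall n, cc f n = 0) -> blin_eval q f x y = 0.
Proof.
move=> /cc_all0 [h1 h2]; rewrite (@eval_bound _ _ _ 0) ?h1 ?h2 ?size_poly0 //.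
by rewrite !big_ord0 addr0.
Qed.

Lemma LT_nz f n : LT f n -> ~~ blin_zero f.
Proof.
move=> [h _]; apply/negP => /andP[/eqP h1 /eqP h2]; move: h.
rewrite /cc h1 h2; case: odd; [case: ifP => _|]; by rewrite ?coef0 ?eqxx.
Qed.

Lemma LT_frob f n : LT f n -> LT (blin_frob q f) n.+2.
Proof.
move=> [h1 h2]; split; first by rewrite cc_frob /= ?subn0 ?subSS ?subn0 expf_eq0 negb_and h1 orbT.
move=> n'; rewrite cc_frob; case: ifP => [h2n|]; last by rewrite eqxx.
rewrite expf_eq0 negb_and hq /= => /h2; rewrite leq_subLR addnC addn2 //.
Qed.

Lemma LT_top f n n' : LT f n -> (n < n')%N -> cc f n' = 0.
Proof.
move=> [_ h] hn; apply/eqP; apply: contraTT hn => /h; by rewrite -leqNgt.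
Qed.

Lemma LT_frob_step D f n : LT f n -> LT (frob_step q D f) n.+2.
Proof.
move=> hL; have [h1 h2] := LT_frob hL.
split; first by rewrite cc_sub cc_scale (LT_top hL (leqnSn n.+1)) mulr0 subr0.
move=> n'; rewrite cc_sub cc_scale; case: (leqP n' n.+2) => // hn.
by rewrite (LT_top hL (ltn_trans _ hn)) ?(LT_top (LT_frob hL) hn) ?mulr0 ?subr0 ?eqxx.
Qed.

Lemma LT_iter t f n : LT f n -> LT (iter t (blin_frob q) f) (n + t.*2).
Proof.
elim: t => [|t IH] hL; first by rewrite addn0.
by rewrite iterS doubleS addnS addnS; apply: LT_frob; apply: IH.
Qed.

Lemma LT_uniq f n n' : LT f n -> LT f n' -> n = n'.
Proof. by move=> [a ha] [b hb]; apply/eqP; rewrite eqn_leq ha ?hb. Qed.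


Definition cx a := a.*2.
Definition cy b := (k - 1 + b).*2.+1.
Definition ev f (p : F * F) := blin_eval q f p.1 p.2.
Definition vanish (s : seq (F * F)) f := forall p, p \in s -> ev f p = 0.

Lemma ev_sub f g p : ev (blin_sub f g) p = ev f p - ev g p.
Proof. exact: eval_sub. Qed.
Lemma ev_scale c f p : ev (blin_scale c f) p = c * ev f p.
Proof. exact: eval_scale. Qed.

Lemma vanish_sub s f g : vanish s f -> vanish s g -> vanish s (blin_sub f g).
Proof. by move=> h1 h2 p hp; rewrite ev_sub h1 ?h2 ?subr0. Qed.
Lemma vanish_scale s c f : vanish s f -> vanish s (blin_scale c f).
Proof. by move=> h1 p hp; rewrite ev_scale h1 ?mulr0. Qed.
Lemma vanish_iter s t f : vanish s f -> vanish s (iter t (blin_frob q) f).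
Proof. by move=> h1 p hp; rewrite /ev eval_iter -/(ev f p) h1 // expr0n expn_eq0 eqn0Ngt hq. Qed.

Lemma decode f n : cc f n != 0 -> (exists e, n = cx e) \/ (exists e, n = cy e).
Proof.
have [j [->|->]] := nat_split n; first by left; exists j.
rewrite cc_odd; case: ifP => hk; last by rewrite eqxx.
by move=> _; right; exists (j - (k - 1))%N; rewrite /cy subnKC.
Qed.

Definition ctop h f N := cc h N / cc f N.
Definition gred h f N := blin_sub h (blin_scale (ctop h f N) f).

Lemma cancel_top h f N : LT h N -> LT f N ->
  (forall n, (N <= n)%N -> cc (gred h f N) n = 0) /\
  (forall p, ev h p = ev (gred h f N) p + ctop h f N * ev f p).
Proof.
move=> hh hf; split; last by move=> p; rewrite ev_sub ev_scale subrK.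
move=> n; rewrite leq_eqVlt => /orP[/eqP <-|hn].
  by rewrite cc_sub cc_scale /ctop mulfVK ?subrr //; case: hf.
by rewrite cc_sub cc_scale (LT_top hh hn) (LT_top hf hn) mulr0 subrr.
Qed.

Definition Inv s f0 f1 a b :=
  [/\ vanish s f0, vanish s f1, LT f0 (cx a), LT f1 (cy b) &
   (forall g e, vanish s g -> LT g (cx e) -> (a <= e)%N) /\
   (forall g e, vanish s g -> LT g (cy e) -> (b <= e)%N)].

Lemma reduceR s f0 f1 a b p : Inv s f0 f1 a b -> forall mu,
  ((cx a < mu)%N -> ev f0 p = 0) -> ((cy b < mu)%N -> ev f1 p = 0) ->
  forall h, vanish s h -> (forall n, (mu <= n)%N -> cc h n = 0) -> ev h p = 0.
Proof.
case=> v0 v1 L0 L1 [m0 m1] mu; elim/ltn_ind: mu => mu IH h0 h1 h vh hb.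
case: (boolP [forall n : 'I_mu, cc h n == 0]) => [/forallP hall|].
  apply: eval_all0 => n; case: (ltnP n mu) => hn; last exact: hb.
  by apply/eqP; apply: (hall (Ordinal hn)).
rewrite negb_forall => /existsP [n0 hn0].
have [N hN] : exists N, LT h N by apply: LT_exists; exists n0.
have hNmu : (N < mu)%N.
  rewrite ltnNge; apply/negP => hc; move: hN => [/eqP hc' _]; exact: hc' (hb _ hc).
have step : forall f, LT f N -> vanish s f -> ev f p = 0 -> ev h p = 0.
  move=> f hf vf ef; have [hg he] := cancel_top hN hf.
  rewrite he ef mulr0 addr0; apply: (IH N hNmu) => //.
  - by move=> hc; apply: h0; apply: ltn_trans hNmu.
  - by move=> hc; apply: h1; apply: ltn_trans hNmu.
  - by apply: vanish_sub => //; apply: vanish_scale.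
have ev_it : forall f (t : nat), ev f p = 0 -> ev (iter t (blin_frob q) f) p = 0.
  by move=> f t ef; rewrite /ev eval_iter -/(ev f p) ef expr0n expn_eq0 eqn0Ngt hq.
case: (decode (proj1 hN)) => [[e he]|[e he]]; subst N.
  have hae := m0 _ _ vh hN.
  have e0 : ev f0 p = 0 by apply: h0; apply: leq_ltn_trans hNmu; rewrite /cx leq_double.
  apply: (step (iter (e - a) (blin_frob q) f0)); last exact: ev_it.
    by have := LT_iter (e - a) L0; rewrite /cx -doubleD subnKC.
  exact: vanish_iter.
have hbe := m1 _ _ vh hN.
have e1 : ev f1 p = 0 by apply: h1; apply: leq_ltn_trans hNmu; rewrite /cy ltnS leq_double leq_add2l.
apply: (step (iter (e - b) (blin_frob q) f1)); last exact: ev_it.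
  by have := LT_iter (e - b) L1; rewrite /cy addSn -doubleD -addnA subnKC.
exact: vanish_iter.
Qed.


Lemma wdeg_LT f n : LT f n -> wdeg k f = n./2.
Proof.
move=> hL; have [hn hmax] := hL; apply/eqP; rewrite eqn_leq; apply/andP; split.
  rewrite /wdeg geq_max; apply/andP; split.
    case: ifP => // hx; rewrite geq_half_double; apply: hmax.
    by rewrite cc_even -lead_coefE lead_coef_eq0.
  case: ifP => // hy; rewrite geq_half_double; apply: leq_trans (leqnSn _) _; apply: hmax.
  by rewrite cc_odd leq_addr addKn -lead_coefE lead_coef_eq0.
rewrite /wdeg; have [j [ej|ej]] := nat_split n; subst n.
  move: hn; rewrite cc_even doubleK => hn.
  have hx : blx f != 0 by apply: contraNneq hn => ->; rewrite coef0.
  rewrite hx; apply: leq_trans (leq_maxl _ _); rewrite -ltnS prednK ?size_poly_gt0 //.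
  by apply: contraR hn; rewrite -leqNgt => hs; rewrite nth_default.
move: hn; rewrite cc_odd (half_bit_double j true); case: ifP => hk; last by rewrite eqxx.
move=> hn; have hy : bly f != 0 by apply: contraNneq hn => ->; rewrite coef0.
rewrite hy; apply: leq_trans (leq_maxr _ _).
rewrite -leq_subLR -ltnS prednK ?size_poly_gt0 //.
by apply: contraR hn; rewrite -leqNgt => hs; rewrite nth_default.
Qed.

Lemma vanish_rcons s p g : vanish (rcons s p) g <-> vanish s g /\ ev g p = 0.
Proof.
split=> [h|[h1 h2] p']; first by split=> [p' hp'|]; apply: h; rewrite mem_rcons inE ?hp' ?orbT ?eqxx.
by rewrite mem_rcons inE => /orP[/eqP ->|]; [|apply: h1].
Qed.

Lemma bumpc s f0 f1 a b p g f N : Inv s f0 f1 a b -> vanish s g -> ev g p = 0 -> LT g N ->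
  vanish s f -> LT f N -> ev f p != 0 ->
  ((cx a < N)%N -> ev f0 p = 0) -> ((cy b < N)%N -> ev f1 p = 0) -> False.
Proof.
move=> hI vg eg Lg vf Lf ef h0 h1.
have [hc he] := cancel_top Lg Lf.
have e0 : ev (gred g f N) p = 0.
  apply: (reduceR hI h0 h1) => //.
  by apply: vanish_sub => //; apply: vanish_scale.
have := he p; rewrite eg e0 add0r => /esym/eqP.
rewrite mulf_eq0 (negbTE ef) orbF /ctop mulf_eq0 invr_eq0.
by case: Lg => /negbTE -> _; case: Lf => /negbTE -> _.
Qed.

Lemma LT_comb1 f g c d N : LT f N -> (forall n, (N <= n)%N -> cc g n = 0) -> c != 0 ->
  LT (blin_sub (blin_scale c f) (blin_scale d g)) N.
Proof.
move=> [h1 h2] hg hc; split; first by rewrite cc_sub !cc_scale hg // mulr0 subr0 mulf_neq0.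
move=> n'; rewrite cc_sub !cc_scale; case: (leqP n' N) => // hn.
by rewrite (LT_top (conj h1 h2) hn) hg ?(ltnW hn) // !mulr0 subr0 eqxx.
Qed.

Lemma LT_comb2 f g c d N : LT f N -> (forall n, (N <= n)%N -> cc g n = 0) -> c != 0 ->
  LT (blin_sub (blin_scale d g) (blin_scale c f)) N.
Proof.
move=> [h1 h2] hg hc; split; first by rewrite cc_sub !cc_scale hg // mulr0 sub0r oppr_eq0 mulf_neq0.
move=> n'; rewrite cc_sub !cc_scale; case: (leqP n' N) => // hn.
by rewrite (LT_top (conj h1 h2) hn) hg ?(ltnW hn) // !mulr0 subr0 eqxx.
Qed.

Lemma cx_cy a b : (cx a < cy b)%N = (a <= k - 1 + b)%N.
Proof. by rewrite /cx /cy ltnS leq_double. Qed.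

Lemma cy_cx a b : (cy b < cx a)%N = (k - 1 + b < a)%N.
Proof. by rewrite /cx /cy -doubleS leq_double. Qed.

Lemma cxS a : cx a.+1 = (cx a).+2.
Proof. by rewrite /cx doubleS. Qed.
Lemma cyS b : cy b.+1 = (cy b).+2.
Proof. by rewrite /cy addnS doubleS. Qed.


Lemma step_inv s f0 f1 a b p : Inv s f0 f1 a b -> ~ (ev f0 p = 0 /\ ev f1 p = 0) ->
  exists a' b', Inv (rcons s p) (algo_step q k (f0, f1) p).1 (algo_step q k (f0, f1) p).2 a' b'.
Proof.
move=> hI nb; have hI' := hI; case: hI' => v0 v1 L0 L1 [m0 m1].
rewrite /algo_step /=.
change (blin_eval q f0 p.1 p.2) with (ev f0 p); change (blin_eval q f1 p.1 p.2) with (ev f1 p).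
have vfs : forall f D, vanish s f -> ev f p = D -> vanish (rcons s p) (frob_step q D f).
  move=> f D vf eD; apply/vanish_rcons; split.
    by move=> p' hp'; apply: frob_step_root; left; apply: vf.
  by apply: frob_step_root; right.
case: eqP => [D0|/eqP D0].
  have D1 : ev f1 p != 0 by apply/eqP => D1; apply: nb.
  exists a, b.+1; split => //.
  - by apply/vanish_rcons.
  - exact: vfs.
  - by rewrite cyS; apply: LT_frob_step.
  split; first by move=> g e /vanish_rcons [vg _]; apply: m0.
  move=> g e /vanish_rcons [vg eg] Lg; have := m1 _ _ vg Lg.
  rewrite leq_eqVlt => /orP [/eqP be|//]; subst e; exfalso.
  by apply: (bumpc hI vg eg Lg v1 L1 D1) => //; rewrite ltnn.
case: eqP => [D1|/eqP D1].
  exists a.+1, b; split => //.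
  - exact: vfs.
  - by apply/vanish_rcons.
  - by rewrite cxS; apply: LT_frob_step.
  split; last by move=> g e /vanish_rcons [vg _]; apply: m1.
  move=> g e /vanish_rcons [vg eg] Lg; have := m0 _ _ vg Lg.
  rewrite leq_eqVlt => /orP [/eqP be|//]; subst e; exfalso.
  by apply: (bumpc hI vg eg Lg v0 L0 D0) => //; rewrite ltnn.
rewrite (wdeg_LT L0) (wdeg_LT L1) /cx doubleK /cy (half_bit_double _ true) -/(cx a) -/(cy b).
have vcomb : vanish (rcons s p) (blin_sub (blin_scale (ev f1 p) f0) (blin_scale (ev f0 p) f1)).
  apply/vanish_rcons; split.
    by apply: vanish_sub; apply: vanish_scale.
  by rewrite ev_sub !ev_scale mulrC subrr.
case: ifP => hw.
  have hc : (cx a < cy b)%N by rewrite cx_cy.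
  exists a.+1, b; split => //.
  - exact: vfs.
  - by rewrite cxS; apply: LT_frob_step.
  - apply: LT_comb2 => // n hn; apply: (LT_top L0); exact: leq_trans hc hn.
  split; last by move=> g e /vanish_rcons [vg _]; apply: m1.
  move=> g e /vanish_rcons [vg eg] Lg; have := m0 _ _ vg Lg.
  rewrite leq_eqVlt => /orP [/eqP be|//]; subst e; exfalso.
  apply: (bumpc hI vg eg Lg v0 L0 D0) => //; first by rewrite ltnn.
  by move=> h; move: (ltn_trans hc h); rewrite ltnn.
have hc : (cy b < cx a)%N by rewrite cy_cx ltnNge hw.
exists a, b.+1; split => //.
- exact: vfs.
- apply: LT_comb1 => // n hn; apply: (LT_top L1); exact: leq_trans hc hn.
- by rewrite cyS; apply: LT_frob_step.
split; first by move=> g e /vanish_rcons [vg _]; apply: m0.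
move=> g e /vanish_rcons [vg eg] Lg; have := m1 _ _ vg Lg.
rewrite leq_eqVlt => /orP [/eqP be|//]; subst e; exfalso.
apply: (bumpc hI vg eg Lg v1 L1 D1) => //; last by rewrite ltnn.
by move=> h; move: (ltn_trans hc h); rewrite ltnn.
Qed.

End Coef.

Section LA.
Variables (F : finFieldType) (q m : nat).
Hypothesis hq1 : (1 < q)%N.
Hypothesis hm : (0 < m)%N.
Hypothesis hF : #|F| = (q ^ m)%N.
Hypothesis hchar : [pchar F].-nat q.
Implicit Types (f g h : blin F) (x y z : F).

Lemma hq : (0 < q)%N. Proof. exact: ltnW. Qed.

Definition indep (s : seq (F * F)) :=
  forall c : nat -> F, (forall l, c l ^+ q = c l) ->
  \sum_(l < size s) c l * (nth (0, 0) s l).1 = 0 ->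
  \sum_(l < size s) c l * (nth (0, 0) s l).2 = 0 ->
  forall l, (l < size s)%N -> c l = 0.

Lemma frobn_sum n (hn : [pchar F].-nat n) I (r : seq I) (P : pred I) (g : I -> F) :
  (\sum_(i <- r | P i) g i) ^+ n = \sum_(i <- r | P i) (g i) ^+ n.
Proof.
have n0 : (0 < n)%N by case/andP: hn.
apply: (big_morph (fun a : F => a ^+ n)) => [a b|]; first exact: exprDn_pchar.
by rewrite expr0n eqn0Ngt n0.
Qed.

Lemma charqs s : [pchar F].-nat (q ^ s)%N.
Proof. by rewrite pnatX hchar. Qed.

Lemma qm z : z ^+ (q ^ m) = z.
Proof. by rewrite -hF expf_card. Qed.

Definition Tr z := \sum_(i < m) z ^+ (q ^ i).

Lemma Tr_fix z : (Tr z) ^+ q = Tr z.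
Proof.
rewrite /Tr (frobn_sum hchar); case: m hm qm => // m' _ qm'.
rewrite big_ord_recr big_ord_recl /= -exprM -expnSr qm' expr1 addrC; congr (_ + _).
by apply: eq_bigr => i _; rewrite -exprM -expnSr.
Qed.

Lemma Tr_nz : ~ (forall b, Tr b = 0).
Proof.
move=> hT; pose T : {poly F} := \sum_(i < m) 'X^(q ^ i).
have hTb : forall b, T.[b] = Tr b.
  by move=> b; rewrite /T horner_sum; apply: eq_bigr => i _; rewrite hornerXn.
have T1 : T`_1 = 1.
  rewrite /T coef_sum; case: m hm => // m' _; rewrite big_ord_recl /= expn0 coefXn eqxx big1 ?addr0 //.
  move=> i _; rewrite coefXn; case: eqP => // h; exfalso.
  have : (q <= q ^ (bump 0 i))%N by rewrite /bump /= add1n expnS leq_pmulr // expn_gt0 hq.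
  by rewrite -h leqNgt hq1.
have Tn0 : T != 0 by apply/eqP => h0; move: T1; rewrite h0 coef0 => /eqP; rewrite eq_sym oner_eq0.
have hs : (size T <= (q ^ m.-1).+1)%N.
  apply: leq_trans (size_sum _ _ _) _; apply/bigmax_leqP => i _.
  by rewrite size_polyXn ltnS leq_pexp2l ?hq // -ltnS prednK.
have hr := max_poly_roots Tn0 (_ : all (root T) (enum F)) (enum_uniq F).
have : (#|F| < size T)%N.
  rewrite cardE; apply: hr; apply/allP => b _; by rewrite /root hTb hT.
rewrite hF => hlt; have := leq_trans hlt hs.
case: m hm => // m' _ /=; rewrite expnS ltnS => hc.
move: hc; rewrite -{2}(mul1n (q ^ m')%N) leq_pmul2r ?expn_gt0 ?hq //.
by rewrite leqNgt hq1.
Qed.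


Lemma Tr_sum (mu z : nat -> F) N :
  (forall t, (t < m)%N -> \sum_(l < N) mu l * z l ^+ (q ^ t) = 0) ->
  forall b, \sum_(l < N) Tr (b * mu l) * z l = 0.
Proof.
move=> E b; rewrite /Tr.
under eq_bigr do rewrite mulr_suml.
rewrite exchange_big /=; apply: big1 => i _.
case: (posnP i) => [i0|ipos].
  rewrite i0 (eq_bigr (fun l : 'I_N => b * (mu l * z l ^+ (q ^ 0)))); last first.
    by move=> l _; rewrite expn0 !expr1 mulrA.
  by rewrite -mulr_sumr E // mulr0.
have hmi : (m - i < m)%N by rewrite ltn_subrL ipos hm.
have ez : forall l, z l = (z l ^+ (q ^ (m - i))) ^+ (q ^ i).
  move=> l; rewrite -exprM -expnD subnK ?qm //; exact: ltnW (ltn_ord i).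
under eq_bigr do rewrite [X in _ * X]ez -exprMn.
rewrite -(frobn_sum (charqs i)).
under eq_bigr do rewrite -mulrA.
by rewrite -mulr_sumr E // mulr0 expr0n expn_eq0 eqn0Ngt hq.
Qed.

Definition wv (pt : F * F) : 'rV[F]_(m + m) :=
  row_mx (\row_(t < m) pt.1 ^+ (q ^ t)) (\row_(t < m) pt.2 ^+ (q ^ t)).

Definition hcv (c : 'cV[F]_(m + m)) : blin F :=
  BLin (Poly [seq c (lshift m i) 0 | i <- enum 'I_m])
       (Poly [seq c (rshift m i) 0 | i <- enum 'I_m]).

Lemma ev_hcv c pt : ev q (hcv c) pt = (wv pt *m c) 0 0.
Proof.
have hs : forall g : 'I_m -> F, (size (Poly [seq g i | i <- enum 'I_m]) <= m)%N.
  by move=> g; apply: leq_trans (size_Poly _) _; rewrite size_map size_enum_ord.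
rewrite /ev (@eval_bound F q (hcv c) pt.1 pt.2 m) ?hs //.
rewrite !mxE big_split_ord /=; congr (_ + _); apply: eq_bigr => i _.
  by rewrite row_mxEl mxE coef_Poly (nth_map i) ?size_enum_ord // nth_ord_enum mulrC.
by rewrite row_mxEr mxE coef_Poly (nth_map i) ?size_enum_ord // nth_ord_enum mulrC.
Qed.


Lemma LA s p : indep (rcons s p) -> (forall h, vanish q s h -> ev q h p = 0) -> False.
Proof.
move=> hind H.
pose n := size s.
pose M : 'M[F]_(n, m + m) := \matrix_(l, j) wv (nth (0,0) s l) 0 j.
have hW : wv p *m cokermx M = 0.
  apply/matrixP => i j; rewrite [RHS]mxE.
  have V : vanish q s (hcv (col j (cokermx M))).
    move=> pt hpt; rewrite ev_hcv.
    have il : (index pt s < n)%N by rewrite index_mem.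
    have := congr1 (fun A : 'M[F]_(n, m + m) => A (Ordinal il) j) (mulmx_coker M); rewrite /= [RHS]mxE => <-.
    rewrite !mxE; apply: eq_bigr => k _; by rewrite !mxE /= nth_index.
  have := H _ V; rewrite ev_hcv => <-.
  rewrite !mxE (ord1 i); apply: eq_bigr => k _; by rewrite !mxE.
have : (wv p <= M)%MS by rewrite submxE hW.
case/submxP => D hD.
pose mu l := if (l < n)%N then oapp (fun i : 'I_n => D 0 i) 0 (insub l) else -1.
have Esel : forall sel : F * F -> F,
    (forall t : 'I_m, sel p ^+ (q ^ t) = \sum_(l < n) D 0 l * sel (nth (0,0) s l) ^+ (q ^ t)) ->
    forall t, (t < m)%N ->
    \sum_(l < size (rcons s p)) mu l * sel (nth (0,0) (rcons s p) l) ^+ (q ^ t) = 0.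
  move=> sel hs t ht; rewrite size_rcons big_ord_recr /= nth_rcons ltnn eqxx /mu ltnn.
  rewrite (eq_bigr (fun l : 'I_n => D 0 l * sel (nth (0,0) s l) ^+ (q ^ t))); last first.
    by move=> l _; rewrite ltn_ord nth_rcons ltn_ord valK.
  by have := hs (Ordinal ht); rewrite /= => ->; rewrite mulN1r subrr.
have E1 := Esel fst _.
have E2 := Esel snd _.
apply: Tr_nz => b.
have : Tr (- b * mu n) = 0; last by rewrite /mu ltnn mulrN1 opprK.
apply: (hind (fun l => Tr (- b * mu l))).
- by move=> l; apply: Tr_fix.
- apply: (Tr_sum (z := fun l => (nth (0,0) (rcons s p) l).1)); apply: E1.
  move=> t; move: (congr1 (fun A : 'M[F]_(1, m + m) => A 0 (lshift m t)) hD); rewrite /= {1}/wv row_mxEl mxE => ->.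
  rewrite mxE; apply: eq_bigr => l _; rewrite mxE.
  by rewrite /wv row_mxEl mxE.
- apply: (Tr_sum (z := fun l => (nth (0,0) (rcons s p) l).2)); apply: E2.
  move=> t; move: (congr1 (fun A : 'M[F]_(1, m + m) => A 0 (rshift m t)) hD); rewrite /= {1}/wv row_mxEr mxE => ->.
  rewrite mxE; apply: eq_bigr => l _; by rewrite mxE /wv row_mxEr mxE.
- by rewrite size_rcons.
Qed.

End LA.

Lemma charq (F : finFieldType) (q m : nat) : (0 < m)%N -> #|F| = (q ^ m)%N -> [pchar F].-nat q.
Proof.
move=> m0 hF.
have [p pr pc] := finPcharP F.
have hA := fin_ring_pchar_abelem pc.
have := abelem_pgroup hA. rewrite /pgroup cardsT => pn.
have qd : (q %| #|F|)%N by rewrite hF -(prednK m0) expnS dvdn_mulr.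
have := pnat_dvd qd pn.
apply: sub_in_pnat => l _; rewrite !inE => /eqP ->. exact pc.
Qed.

Section Mono.
Variables (F : fieldType) (k : nat).
Implicit Types (f g : blin F).

Definition code (mo : mono) := match mo with inl i => cx i | inr j => cy k j end.

Lemma mcoef_cc f mo : mcoef f mo = cc k f (code mo).
Proof. by case: mo => i /=; rewrite /cx /cy ?cc_even // cc_odd leq_addr addKn. Qed.

Lemma mono_lt_code a b : mono_lt k a b = (code a < code b)%N.
Proof.
rewrite /mono_lt; case: a => i; case: b => j /=; rewrite /cx /cy ?andbF ?orbF ?andbT.
- by rewrite ltn_double.
- by rewrite ltnS leq_double [RHS]leq_eqVlt orbC.
- by rewrite -doubleS leq_double.
- by rewrite ltnS ltn_double.
Qed.

Lemma code_inj : injective code.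
Proof.
move=> a b; case: a => i; case: b => j /= h.
- by congr inl; apply: double_inj.
- by move: (congr1 odd h); rewrite /cx /cy /= !odd_double.
- by move: (congr1 odd h); rewrite /cx /cy /= !odd_double.
- by congr inr; move: h; rewrite /cy => -[] /double_inj /addnI.
Qed.

Lemma mono_le_code a b : mono_le k a b = (code a <= code b)%N.
Proof.
rewrite /mono_le mono_lt_code [RHS]leq_eqVlt; congr (_ || _).
apply/eqP/eqP => [->//|]; exact: code_inj.
Qed.

Lemma LT_is_lt f mo : LT k f (code mo) -> is_lt k f mo.
Proof.
move=> [h1 h2]; split; first by rewrite mcoef_cc.
by move=> mo'; rewrite mcoef_cc mono_le_code; apply: h2.
Qed.

Lemma is_lt_LT f mo : is_lt k f mo -> LT k f (code mo).
Proof.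
move=> [h1 h2]; split; first by rewrite -mcoef_cc.
move=> n hn; case: (decode hn) => [[e he]|[e he]]; subst n.
  by have := h2 (inl e); rewrite mcoef_cc mono_le_code; apply.
by have := h2 (inr e); rewrite mcoef_cc mono_le_code; apply.
Qed.

End Mono.

Section Main.
Variables (F : finFieldType) (q m k : nat).
Hypothesis hq1 : (1 < q)%N.
Hypothesis hm : (0 < m)%N.
Hypothesis hF : #|F| = (q ^ m)%N.
Implicit Types (f g h : blin F) (s : seq (F * F)) (p : F * F).

Let hchar : [pchar F].-nat q := charq hm hF.
Let hq0 : (0 < q)%N := ltnW hq1.

Lemma notboth s f0 f1 a b p : Inv q k s f0 f1 a b -> indep q (rcons s p) ->
  ~ (ev q f0 p = 0 /\ ev q f1 p = 0).
Proof.
move=> hI hind [e0 e1]; apply: (LA hq1 hm hF hchar hind) => h vh.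
apply: (reduceR hq0 hchar hI (mu := ccb k h)) => // n hn; exact: cc_bound.
Qed.

Lemma indep_prefix s p : indep q (rcons s p) -> indep q s.
Proof.
move=> hi c hc e1 e2 l hl.
pose c' l := if (l < size s)%N then c l else 0.
have := hi c' _ _ _ l; rewrite /c' hl size_rcons; apply => //.
- by move=> j; case: ifP => // _; rewrite expr0n eqn0Ngt hq0.
- rewrite big_ord_recr /= ltnn mul0r addr0 -[RHS]e1; apply: eq_bigr => i _.
  by rewrite ltn_ord nth_rcons ltn_ord.
- rewrite big_ord_recr /= ltnn mul0r addr0 -[RHS]e2; apply: eq_bigr => i _.
  by rewrite ltn_ord nth_rcons ltn_ord.
- exact: ltnW.
Qed.

Lemma LT_x : LT k (blin_x F) (cx 0).
Proof.
split; first by rewrite /cx cc_even coef1 eqxx oner_eq0.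
move=> n; have [j [->|->]] := nat_split n.
  rewrite cc_even coef1; case: j => [|j] //=; by rewrite mulr0n eqxx.
by rewrite cc_odd /=; case: ifP => _; rewrite ?coef0 eqxx.
Qed.

Lemma LT_y : LT k (blin_y F) (cy k 0).
Proof.
split; first by rewrite /cy cc_odd addn0 leqnn subnn coef1 eqxx oner_eq0.
move=> n; have [j [->|->]] := nat_split n; first by rewrite cc_even coef0 eqxx.
rewrite cc_odd; case: ifP => hk; last by rewrite eqxx.
rewrite coef1; case: (j - (k - 1) =P 0)%N => [he _|]; last by rewrite mulr0n eqxx.
rewrite /cy addn0 ltnS leq_double.
by move/eqP: he; rewrite subn_eq0.
Qed.

Lemma algo_inv s : indep q s -> exists a b,
  Inv q k s (foldl (algo_step q k) (blin_x F, blin_y F) s).1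
            (foldl (algo_step q k) (blin_x F, blin_y F) s).2 a b.
Proof.
elim/last_ind: s => [|s p IH] hind.
  exists 0%N, 0%N; split => //; [exact: LT_x|exact: LT_y].
have [a [b hI]] := IH (indep_prefix hind).
rewrite foldl_rcons.
move: hI; case: (foldl (algo_step q k) (blin_x F, blin_y F) s) => f0 f1 /= hI.
apply: (step_inv hq0 hchar hI); exact: notboth hI hind.
Qed.

End Main.

Unset Implicit Arguments.
Theorem theorem16 (F : finFieldType) (q m k r : nat) (P : 'I_r -> F * F) :
  (1 < q)%N -> (0 < m)%N -> #|F| = (q ^ m)%N -> (1 <= k)%N ->
  Fq_lin_indep q P ->
  x_minimal q k P (algo q k P).1 /\ y_minimal q k P (algo q k P).2.
Proof.
move=> hq1 hm hF hk hP.
pose s := [seq P i | i <- enum 'I_r].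
have hs : indep q s.
  move=> c hc e1 e2 l hl.
  have hr : size s = r by rewrite size_map size_enum_ord.
  have hl' : (l < r)%N by rewrite -hr.
  have hn : forall i : 'I_r, nth (0, 0) s i = P i.
    by move=> i; rewrite (nth_map i) ?size_enum_ord // nth_ord_enum.
  have := hP (fun i => c i) (fun i => hc i) _ _ (Ordinal hl'); apply.
  - rewrite -[RHS]e1; move: (nth (0,0) s) hn; rewrite hr => g hn.
    by apply: eq_bigr => i _; rewrite hn.
  - rewrite -[RHS]e2; move: (nth (0,0) s) hn; rewrite hr => g hn.
    by apply: eq_bigr => i _; rewrite hn.
have [a [b hI]] := algo_inv k hq1 hm hF hs.
rewrite /algo -/s; case: hI => v0 v1 L0 L1 [m0 m1].
have vP : forall g, vanish q s g -> vanishes_on q P g.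
  by move=> g vg i; apply: (vg (P i)); apply: map_f; rewrite mem_enum.
have Pv : forall g, vanishes_on q P g -> vanish q s g.
  by move=> g vg pt /mapP [i _ ->]; apply: vg.
split.
  split; first exact: LT_nz L0.
  split; first exact: vP.
  exists a; split; first exact: (@LT_is_lt _ k _ (inl a)).
  move=> g e _ vg lg; have := m0 g e (Pv _ vg) (is_lt_LT lg).
  by rewrite /mono_lt /= andbF orbF -leqNgt.
split; first exact: LT_nz L1.
split; first exact: vP.
exists b; split; first exact: (@LT_is_lt _ k _ (inr b)).
move=> g e _ vg lg; have := m1 g e (Pv _ vg) (is_lt_LT lg).
by rewrite /mono_lt /= andbF orbF ltn_add2l -leqNgt.
Qed.
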